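(* Let $p \geq 2$. Consider parameter tuples $(\pi, \alpha, u_1, \dots, u_p, h)$ where $\pi \in (0,1)$, $\alpha \in \mathbb{R}$, $h$ is a probability density on $\mathbb{R}^p$, and $u_j$ are real functions, such that the following hold. The density $h$ and the density \[ g(\mathbf{x}) = \exp\Big\{\alpha + \sum_{j=1}^p u_j(x_j)\Big\} h(\mathbf{x}) \] share a common compact support $\mathcal{T} = \mathcal{T}_1 \times \cdots \times \mathcal{T}_p$, where $\mathcal{T}_j$ is the support of $u_j$ for $j = 1, \dots, p$. Each $u_j$ satisfies the centering constraint $\int u_j(x_j)\, dx_j = 0$. The normalization $\int \exp\{\alpha + \sum_{j=1}^p u_j(x_j)\} h(\mathbf{x})\, d\mathbf{x} = 1$ holds. Finally, there exist two distinct indices $j, k \in \{1,\dots,p\}$ such that $u_j$ and $u_k$ are both non-constant on their respective supports. Such a tuple generates the labeled-sample density $g$ and the unlabeled-sample density $f = \pi g + (1-\pi) h$. Then the model uniquely determines $(\pi, \alpha, u_1, \dots, u_p)$. That is, if two such tuples generate the same pair $(g, f)$, then they have the same values of $\pi$, $\alpha$, $u_1, \dots, u_p$.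
   Context: Positive-unlabeled (PU) data under the ''selected completely at random'' assumption. The labeled sample $\mathbf{x}_1, \dots, \mathbf{x}_{n_0}$ is drawn from the positive-class density $g(\mathbf{x})$. The unlabeled sample $\mathbf{x}_{n_0+1}, \dots, \mathbf{x}_n$ is drawn from the mixture $\pi g(\mathbf{x}) + (1-\pi) h(\mathbf{x})$, where $h$ is the negative-class density and $\pi \in (0,1)$ is the mixture proportion. The generalized additive exponential tilting (GAET) model assumes \[ \log\{g(\mathbf{x})/h(\mathbf{x})\} = \alpha + \sum_{j=1}^p u_j(x_j), \] where $x_j$ is the $j$-th coordinate of $\mathbf{x} \in \mathbb{R}^p$. Each $u_j$ is an unspecified function satisfying $\int u_j(x_j)\, dx_j = 0$. The constant $\alpha$ ensures $\int \exp\{\alpha + \sum_j u_j(x_j)\} h(\mathbf{x})\, d\mathbf{x} = 1$. *)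

(* Defs.v *)
From HB Require Import structures.
From mathcomp Require Import all_boot all_order all_algebra.
From mathcomp Require Import all_classical all_reals all_analysis.
Set Implicit Arguments. Unset Strict Implicit. Unset Printing Implicit Defensive.
Import Order.TTheory GRing.Theory Num.Theory.
Import numFieldNormedType.Exports.
Local Open Scope classical_set_scope.
Local Open Scope ring_scope.

(* Lebesgue integral over R^n (points are n-tuples of reals), defined as the
   iterated Lebesgue integral; for nonnegative measurable integrands this is
   the Lebesgue integral w.r.t. the n-dimensional Lebesgue measure (Tonelli). *)
Fixpoint iint {R : realType} (n : nat) : (n.-tuple R -> \bar R) -> \bar R :=
  match n return (n.-tuple R -> \bar R) -> \bar R with
  | 0 => fun F => F [tuple]
  | n'.+1 => fun F =>
      (\int[@lebesgue_measure R]_(t in [set: R])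
          iint (fun x : n'.-tuple R => F [tuple of t :: x]))%E
  end.

Definition supp {T : Type} {R : realType} (f : T -> R) : set T :=
  [set x | f x != 0].

Definition prod_set {R : realType} (p : nat) (T : 'I_p -> set R) :
  set (p.-tuple R) := [set x | forall j, T j (tnth x j)].

Definition gdens {R : realType} (p : nat) (alpha : R) (u : 'I_p -> R -> R)
  (h : p.-tuple R -> R) (x : p.-tuple R) : R :=
  expR (alpha + \sum_(j < p) u j (tnth x j)) * h x.

Definition fdens {R : realType} (p : nat) (pi alpha : R) (u : 'I_p -> R -> R)
  (h : p.-tuple R -> R) (x : p.-tuple R) : R :=
  pi * gdens alpha u h x + (1 - pi) * h x.

Definition GAET_admissible {R : realType} (p : nat) (pi alpha : R)
  (u : 'I_p -> R -> R) (h : p.-tuple R -> R) : Prop :=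
  [/\ 0 < pi < 1,
      [/\ measurable_fun [set: p.-tuple R] h,
          (forall x, 0 <= h x) &
          iint (fun x => (h x)%:E) = 1%E],
      (forall j, measurable_fun [set: R] (u j)
              /\ (@lebesgue_measure R).-integrable [set: R] (fun t => (u j t)%:E)
              /\ (\int[@lebesgue_measure R]_(t in [set: R]) (u j t)%:E)%E = 0%E),
      iint (fun x => (gdens alpha u h x)%:E) = 1%E &
      exists T : 'I_p -> set R,
        [/\ forall j, compact (T j),
            supp h = prod_set T,
            supp (gdens alpha u h) = prod_set T,
            (forall j, supp (u j) `<=` T j) &
            exists j k : 'I_p, [/\ j != k,
              (exists s t, [/\ T j s, T j t & u j s != u j t]) &
              (exists s t, [/\ T k s, T k t & u k s != u k t])]]].

(* Main.v *)
Require Import Defs.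
From HB Require Import structures.
From mathcomp Require Import all_boot all_order all_algebra.
From mathcomp Require Import all_classical all_reals all_analysis.
From mathcomp Require Import ring lra.
Import Order.TTheory GRing.Theory Num.Theory.
Local Open Scope ring_scope.
Section Helpers.
Import numFieldNormedType.Exports.
Local Open Scope classical_set_scope.
Local Open Scope ereal_scope.
Import HBNNSimple.
Variable R : realType.
Let mu := @lebesgue_measure R.

Lemma null0 (f : R -> \bar R) (N : set R) : measurable N -> mu N = 0 ->
  (forall t, 0 <= f t) -> (forall t, ~ N t -> f t = 0) ->
  \int[mu]_(t in [set: R]) f t = 0.
Proof.
move=> mN N0 f0 fN; apply/eqP; rewrite eq_le integral_ge0 ?andbT//.
rewrite ge0_integralTE//; apply/ge_ereal_sup => _ [h /= hf <-].
rewrite -integralT_nnsfun.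
have hN : forall t, ~ N t -> (h t)%:E = 0.
  move=> t Nt; apply/eqP; rewrite eq_le !lee_fin fun_ge0 andbT -lee_fin.
  by apply: le_trans (hf t) _; rewrite fN.
rewrite (@eq_integral _ _ _ mu _ ((EFin \o h) \_ N)); last first.
  move=> t _; rewrite /patch; case: ifPn => // /negP; rewrite inE => Nt.
  by rewrite /= hN.
rewrite -integral_mkcond null_set_integral//.
apply/measurable_realfun.measurable_EFinP. by apply: measurable_funTS.
Qed.

Lemma iint0 n (F : n.-tuple R -> \bar R) : (forall x, F x = 0) -> iint F = 0.
Proof.
elim: n F => [|n IH] F F0 /=; first exact: F0.
by apply: integral0_eq => t _; apply: IH => x; exact: F0.
Qed.

Lemma iint_ge0 n (F : n.-tuple R -> \bar R) : (forall x, 0 <= F x) -> 0 <= iint F.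
Proof.
elim: n F => [|n IH] F F0 /=; first exact: F0.
by apply: integral_ge0 => t _; apply: IH => x; exact: F0.
Qed.

Lemma iint_null n (F : n.-tuple R -> \bar R) (j : 'I_n) (N : set R) :
  measurable N -> mu N = 0 -> (forall x, 0 <= F x) ->
  (forall x, ~ N (tnth x j) -> F x = 0) -> iint F = 0.
Proof.
move=> mN N0; elim: n F j => [|n IH] F j; first by case: j.
move=> F0; rewrite /=.
case: (unliftP ord0 j) => [j'|] -> FN.
  apply: integral0_eq => t _; apply: (IH _ j') => [x|x Nx]; first exact: F0.
  by apply: FN; rewrite (tnth_nth t) /= -tnth_nth.
refine (null0 _ _ mN N0 _ _) => [t|t Nt]; first by apply: iint_ge0 => x; exact: F0.
by apply: iint0 => x; apply: FN; rewrite (tnth_nth t) /=.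
Qed.
End Helpers.
Section H2.
Import numFieldNormedType.Exports.
Local Open Scope classical_set_scope.
Variable R : realType.

Definition upd p (z : p.-tuple R) (j : 'I_p) (a : R) : p.-tuple R :=
  [tuple (if i == j then a else tnth z i) | i < p].

Arguments upd {p}.

Lemma tnth_upd p (z : p.-tuple R) j a i :
  tnth (upd z j a) i = if i == j then a else tnth z i.
Proof. by rewrite tnth_mktuple. Qed.

Lemma upd_id p (z : p.-tuple R) j : upd z j (tnth z j) = z.
Proof. by apply: eq_from_tnth => i; rewrite tnth_upd; case: eqP => // ->. Qed.

Lemma sum_upd1 p (u : 'I_p -> R -> R) (z : p.-tuple R) j :
  exists C, forall a, \sum_(i < p) u i (tnth (upd z j a) i) = u j a + C.
Proof.
exists (\sum_(i < p | i != j) u i (tnth z i)) => a.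
rewrite (bigD1 j) //= tnth_upd eqxx; congr (_ + _).
by apply: eq_bigr => i /negbTE ij; rewrite tnth_upd ij.
Qed.

Lemma sum_upd2 p (u : 'I_p -> R -> R) (z : p.-tuple R) j k : j != k ->
  exists C, forall a b,
    \sum_(i < p) u i (tnth (upd (upd z j a) k b) i) = u j a + u k b + C.
Proof.
move=> jk.
exists (\sum_(i < p | (i != k) && (i != j)) u i (tnth z i)) => a b.
rewrite (bigD1 k) //= tnth_upd eqxx (bigD1 j) /=; last by rewrite jk.
rewrite tnth_upd (negbTE jk) tnth_upd eqxx addrA [u k b + _]addrC.
congr (_ + _ + _); apply: eq_bigr => i /andP[ik ij].
by rewrite !tnth_upd (negbTE ik) (negbTE ij).
Qed.

Lemma zero_coef (E : R) (A : set R) : 0 <= E -> measurable A ->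
  (@lebesgue_measure R A != 0)%E ->
  (\int[@lebesgue_measure R]_(t in [set: R]) (E * \1_A t)%:E = 0)%E -> E = 0.
Proof.
move=> E0 mA A0.
have := @integralZl_indic _ _ R (@lebesgue_measure R) setT measurableT
  (fun _ => A) E _ mA; rewrite /= => ->; last first.
  by move=> /lt_le_trans/(_ E0); rewrite ltxx.
rewrite integral_indic // setIT => /eqP; rewrite mule_eq0 (negbTE A0) orbF.
by move/eqP => [].
Qed.
End H2.
Arguments upd {R p}.
Arguments upd_id {R p}.
Arguments tnth_upd {R p}.
Theorem theorem1 (R : realType) (p : nat) (hp : (2 <= p)%N)
  (pi1 alpha1 : R) (u1 : 'I_p -> R -> R) (h1 : p.-tuple R -> R)
  (pi2 alpha2 : R) (u2 : 'I_p -> R -> R) (h2 : p.-tuple R -> R) :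
  GAET_admissible pi1 alpha1 u1 h1 ->
  GAET_admissible pi2 alpha2 u2 h2 ->
  gdens alpha1 u1 h1 = gdens alpha2 u2 h2 ->
  fdens pi1 alpha1 u1 h1 = fdens pi2 alpha2 u2 h2 ->
  [/\ pi1 = pi2, alpha1 = alpha2 & forall j, u1 j = u2 j].
Proof.
move=> [/andP[pi1a pi1b] [mh1 h1ge0 ih1] hu1 ig1
        [T [Tc sh1 sg1 su1 [j [k [jk [s [t [Tjs Tjt ust]]] [s' [t' [Tks' Tkt' ust']]]]]]]]].
move=> [/andP[pi2a pi2b] [mh2 h2ge0 ih2] hu2 ig2 [T2 [Tc2 sh2 sg2 su2 _]]].
move=> Hg Hf.
have hT x : (prod_set T x -> h1 x != 0)%classic.
  by move=> Tx; have : supp h1 x by rewrite sh1.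
have hnT x : ~ (prod_set T x)%classic -> h1 x = 0.
  move=> nTx; apply/eqP; apply/negP => /negP hx; apply: nTx.
  by rewrite -sh1.
have measT i : measurable (T i).
  exact: measurable_realfun.closed_measurable (compact_closed (@Rhausdorff R) (Tc i)).
have posT i : (@lebesgue_measure R (T i) != 0)%E.
  apply/negP => /eqP T0.
  have := @iint_null R p (fun x => (h1 x)%:E) i (T i) (measT i) T0.
  rewrite ih1 => H; have : (1%E = 0 :> \bar R)%E.
    apply: H => [x|x nTx]; first by rewrite lee_fin.
    by rewrite hnT // => /(_ i).
  by case=> /eqP; rewrite oner_eq0.
have [z Tz] : exists z, (prod_set T z)%classic.
  case: (pselect (exists z, (prod_set T z)%classic)) => // nz.
  have : iint (fun x => (h1 x)%:E) = 0%E.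
    by apply: iint0 => x; rewrite hnT // => Tx; apply: nz; exists x.
  by rewrite ih1 => -[] /eqP; rewrite oner_eq0.
have TT2 : prod_set T = prod_set T2 by rewrite -sg1 -sg2 Hg.
have T2T i a : T2 i a -> T i a.
  move=> T2a; have : (prod_set T2 (upd z i a))%classic.
    move=> l; rewrite tnth_upd; case: eqP => [->//|_].
    by move: Tz; rewrite TT2 => /(_ l).
  by rewrite -TT2 => /(_ i); rewrite tnth_upd eqxx.
pose s1 x := alpha1 + \sum_(i < p) u1 i (tnth x i).
pose s2 x := alpha2 + \sum_(i < p) u2 i (tnth x i).
have key x : (prod_set T x)%classic ->
    (1 - pi1) * expR (- s1 x) - (1 - pi2) * expR (- s2 x) = pi2 - pi1.
  move=> Tx.
  have gx := congr1 (fun f => f x) Hg; have fx := congr1 (fun f => f x) Hf.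
  rewrite /fdens /= in fx; rewrite /= in gx.
  rewrite -gx in fx.
  rewrite /gdens -/(s1 x) -/(s2 x) in gx fx.
  set G := expR (s1 x) * h1 x in gx fx.
  have H1 : G * expR (- s1 x) = h1 x.
    by rewrite /G mulrC mulrA -expRD addNr expR0 mul1r.
  have H2 : G * expR (- s2 x) = h2 x.
    by rewrite gx mulrC mulrA -expRD addNr expR0 mul1r.
  have G0 : G != 0 by rewrite /G mulf_neq0 ?hT // gt_eqF // expR_gt0.
  apply: (mulfI G0).
  have -> : G * ((1 - pi1) * expR (- s1 x) - (1 - pi2) * expR (- s2 x)) =
     (1 - pi1) * (G * expR (- s1 x)) - (1 - pi2) * (G * expR (- s2 x)) by ring.
  rewrite H1 H2; apply/eqP; lra.
have [C1 HC1] := @sum_upd2 R p u1 z j k jk.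
have [C2 HC2] := @sum_upd2 R p u2 z j k jk.
pose K := (1 - pi1) * expR (- (alpha1 + C1)).
pose L := (1 - pi2) * expR (- (alpha2 + C2)).
have eq4 a b : T j a -> T k b ->
   K * expR (- u1 j a) * expR (- u1 k b) - L * expR (- u2 j a) * expR (- u2 k b)
   = pi2 - pi1.
  move=> Ta Tb; rewrite -(key (upd (upd z j a) k b)); last first.
    move=> l; rewrite !tnth_upd; case: eqP => [->//|_]; case: eqP => [->//|_].
    exact: Tz.
  rewrite /s1 /s2 HC1 HC2 /K /L -!mulrA -!expRD.
  by congr (_ * expR _ - _ * expR _); ring.
have c0 : pi2 - pi1 = 0.
  have E : (K * expR (- u1 j s) * expR (- u1 k s') - (pi2 - pi1)) *
           (K * expR (- u1 j t) * expR (- u1 k t') - (pi2 - pi1)) =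
           (K * expR (- u1 j s) * expR (- u1 k t') - (pi2 - pi1)) *
           (K * expR (- u1 j t) * expR (- u1 k s') - (pi2 - pi1)).
    have e4 a b : T j a -> T k b -> K * expR (- u1 j a) * expR (- u1 k b) - (pi2 - pi1)
       = L * expR (- u2 j a) * expR (- u2 k b).
      by move=> Ta Tb; rewrite -(eq4 a b Ta Tb); ring.
    rewrite !e4 //; ring.
  have : (pi2 - pi1) * K * (expR (- u1 j s) - expR (- u1 j t)) *
         (expR (- u1 k s') - expR (- u1 k t')) = 0.
    have -> : (pi2 - pi1) * K * (expR (- u1 j s) - expR (- u1 j t)) *
         (expR (- u1 k s') - expR (- u1 k t')) =
         (K * expR (- u1 j s) * expR (- u1 k t') - (pi2 - pi1)) *
           (K * expR (- u1 j t) * expR (- u1 k s') - (pi2 - pi1)) -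
         (K * expR (- u1 j s) * expR (- u1 k s') - (pi2 - pi1)) *
           (K * expR (- u1 j t) * expR (- u1 k t') - (pi2 - pi1)) by ring.
    by rewrite E subrr.
  move/eqP; rewrite !mulf_eq0 => /orP[/orP[/orP[/eqP//|]|]|].
  - by rewrite gt_eqF ?subr_gt0 // gt_eqF // expR_gt0.
  - rewrite subr_eq0 => /eqP /expR_inj /oppr_inj /eqP; by rewrite (negbTE ust).
  - rewrite subr_eq0 => /eqP /expR_inj /oppr_inj /eqP; by rewrite (negbTE ust').
have pi12 : pi1 = pi2 by apply/eqP; rewrite eq_sym -subr_eq0 c0.
have s12 x : (prod_set T x)%classic -> s1 x = s2 x.
  move=> Tx; have := key x Tx; rewrite c0 -pi12 -mulrBr => /eqP.
  rewrite mulf_eq0 gt_eqF ?subr_gt0 //= subr_eq0 => /eqP /expR_inj.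
  exact: oppr_inj.
have uj j0 : u1 j0 = u2 j0.
  have [A1 HA1] := @sum_upd1 R p u1 z j0.
  have [A2 HA2] := @sum_upd1 R p u2 z j0.
  pose D := u1 j0 (tnth z j0) - u2 j0 (tnth z j0).
  have inT a : T j0 a -> u1 j0 a - u2 j0 a = D.
    move=> Ta.
    have e1 : s1 (upd z j0 a) = s2 (upd z j0 a).
      apply: s12 => l; rewrite tnth_upd; case: eqP => [->//|_]; exact: Tz.
    have e0 := s12 _ Tz; rewrite -{1}(upd_id z j0) -[in s2 z](upd_id z j0) in e0.
    move: e1 e0; rewrite /s1 /s2 !HA1 !HA2 /D; lra.
  have outT a : ~ T j0 a -> u1 j0 a = 0 /\ u2 j0 a = 0.
    move=> Ta; split; apply/eqP; apply/negP => /negP H; apply: Ta.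
      exact: (su1 j0 a H).
    exact: T2T (su2 j0 a H).
  have hD a : u1 j0 a - u2 j0 a = D * \1_(T j0) a.
    rewrite indicE; case: (pselect (T j0 a)) => Ta.
      by rewrite mem_set // mulr1 inT.
    by rewrite memNset // mulr0; case: (outT a Ta) => -> ->; rewrite subr0.
  have [_ [i1 I1]] := hu1 j0.
  have [_ [i2 I2]] := hu2 j0.
  have I0 : (\int[@lebesgue_measure R]_(a in [set: R]) (u1 j0 a - u2 j0 a)%:E = 0)%E.
    have := integralB measurableT i1 i2; rewrite I1 I2 sube0 => <-.
    by apply: eq_integral => a _; rewrite EFinB.
  have I0' : (\int[@lebesgue_measure R]_(a in [set: R]) (u2 j0 a - u1 j0 a)%:E = 0)%E.
    have := integralB measurableT i2 i1; rewrite I1 I2 sube0 => <-.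
    by apply: eq_integral => a _; rewrite EFinB.
  have D0 : D = 0.
    have [Dge0|Dlt0] := leP 0 D.
      refine (@zero_coef R D (T j0) Dge0 (measT j0) (posT j0) _).
      by rewrite -I0; apply: eq_integral => a _; rewrite hD.
    apply/eqP; rewrite -oppr_eq0; apply/eqP.
    have mD : 0 <= - D by rewrite oppr_ge0 ltW.
    refine (@zero_coef R (- D) (T j0) mD (measT j0) (posT j0) _).
    rewrite -I0'; apply: eq_integral => a _.
    by rewrite mulNr -hD opprB.
  apply/funext => a; apply/eqP; rewrite -subr_eq0 hD D0 mul0r //.
split => //.
have := s12 _ Tz; rewrite /s1 /s2.
under eq_bigr do rewrite uj.
move=> H; lra.
Qed.
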